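(* A family of structures $\mathfrak{K}=\{\mathcal{A}_i:i\in\mathbb{N}\}$ is $\mathbf{Fin}$-learnable if and only if it is $=_{\mathbb{N}}$-learnable.
   Context: All structures are countable, have domain $\mathbb{N}$, are in a finite relational signature, and are identified with their atomic diagrams (elements of $2^{\mathbb{N}}$ via a fixed Gödel numbering). A family of structures $\mathfrak{K}$ is a countable set of pairwise nonisomorphic such structures. For a structure $\mathcal{S}$ and $s\in\mathbb{N}$, $\mathcal{S}\restriction_s$ denotes the finite substructure with domain $\{0,\dots,s\}$. The learning domain $\mathrm{LD}(\mathfrak{K})\subseteq 2^{\mathbb{N}}$ is the set of all structures with domain $\mathbb{N}$ isomorphic to some member of $\mathfrak{K}$, with the subspace topology of Cantor space. The hypothesis space is $\{\ulcorner\mathcal{A}\urcorner:\mathcal{A}\in\mathfrak{K}\}\cup\{?\}$ (pairwise distinct formal symbols). A learner is an arbitrary function $\mathbf{M}$ from $\{\mathcal{S}\restriction_s:\mathcal{S}\in\mathrm{LD}(\mathfrak{K}),s\in\mathbb{N}\}$ to the hypothesis space. $\mathfrak{K}$ is $\mathbf{Fin}$-learnable if there is a learner $\mathbf{M}$ such that for every $\mathcal{S}\in\mathrm{LD}(\mathfrak{K})$ there is $s_0$ with $\mathbf{M}(\mathcal{S}\restriction_t)=?$ for all $t<s_0$ and $\mathbf{M}(\mathcal{S}\restriction_t)=\ulcorner\mathcal{A}\urcorner$ for all $t\geq s_0$, where $\mathcal{A}\in\mathfrak{K}$ is isomorphic to $\mathcal{S}$. For an equivalence relation $E$ on a space $X$,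 $\mathfrak{K}$ is $E$-learnable if there is a continuous function $\Gamma:\mathrm{LD}(\mathfrak{K})\to X$ such that for all $\mathcal{S},\mathcal{S}'\in\mathrm{LD}(\mathfrak{K})$: $\mathcal{S}\cong\mathcal{S}'\iff\Gamma(\mathcal{S})\,E\,\Gamma(\mathcal{S}')$. Here $=_{\mathbb{N}}$ is equality on $\mathbb{N}$ with the discrete topology. *)

(* Defs.v *)
From mathcomp Require Import all_boot.
Set Implicit Arguments. Unset Strict Implicit. Unset Printing Implicit Defensive.

(* A finite relational signature: the list of arities of its relation symbols. *)
Definition signature := seq nat.

(* Only the "atomic facts" below are meaningful; well-formed structures are
   false on everything else, so well-formed structures correspond exactly to
   atomic diagrams (elements of 2^N via a Goedel numbering of the atoms). *)
Definition structure := nat -> seq nat -> bool.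

Definition atom (L : signature) (i : nat) (t : seq nat) : bool :=
  (i < size L) && (size t == nth 0 L i).

Definition wf (L : signature) (S : structure) : Prop :=
  forall i t, ~~ atom L i t -> S i t = false.

(* S and S' have the same finite substructure on domain {0,...,s}:
   S|s = S'|s. *)
Definition agree (L : signature) (s : nat) (S S' : structure) : Prop :=
  forall i t, atom L i t -> all (fun x => x <= s) t -> S i t = S' i t.

Definition iso (L : signature) (S S' : structure) : Prop :=
  exists f : nat -> nat, bijective f /\
    forall i t, atom L i t -> S' i (map f t) = S i t.

Definition LD (L : signature) (K : nat -> structure) (S : structure) : Prop :=
  wf L S /\ exists n, iso L (K n) S.

(* A learner: maps S|s (for S in LD) to a hypothesis; None = "?",
   Some n = the code of K n.  It is given as a function of (s, S) that
   depends only on the finite substructure S|s. *)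
Definition learner (L : signature) (K : nat -> structure)
  (M : nat -> structure -> option nat) : Prop :=
  forall s S S', LD L K S -> LD L K S' -> agree L s S S' -> M s S = M s S'.

Definition Fin_learnable (L : signature) (K : nat -> structure) : Prop :=
  exists M, learner L K M /\
    forall S, LD L K S -> exists s0,
      (forall t, t < s0 -> M t S = None) /\
      exists n, iso L (K n) S /\ (forall t, s0 <= t -> M t S = Some n).

(* Continuity of G : LD(K) -> N (N discrete, LD(K) with the subspace topology
   of Cantor space): G is locally constant on LD(K).  Since the signature is
   finite, the basic clopen neighbourhoods of S in Cantor space are exactly
   (up to refinement) the sets {S' | S'|s = S|s}. *)
Definition continuous_LD_nat (L : signature) (K : nat -> structure)
  (G : structure -> nat) : Prop :=
  forall S, LD L K S -> exists s, forall S', LD L K S' -> agree L s S S' ->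
    G S' = G S.

Definition eqN_learnable (L : signature) (K : nat -> structure) : Prop :=
  exists G : structure -> nat, continuous_LD_nat L K G /\
    forall S S', LD L K S -> LD L K S' -> (iso L S S' <-> G S = G S').

Definition is_family (L : signature) (K : nat -> structure) : Prop :=
  (forall n, wf L (K n)) /\ (forall m n, iso L (K m) (K n) -> m = n).

(* Main.v *)
Require Import Defs.
From mathcomp Require Import all_boot.
From Stdlib Require Import Classical ClassicalEpsilon.
Set Implicit Arguments. Unset Strict Implicit.

Lemma atom_map L i t (f : nat -> nat) : atom L i (map f t) = atom L i t.
Proof. by rewrite /atom size_map. Qed.

Lemma iso_sym L S S' : iso L S S' -> iso L S' S.
Proof.
move=> [f [[g fg gf] H]]; exists g; split; first by exists f.
move=> i t At; rewrite -H ?atom_map //; by rewrite (mapK gf).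
Qed.

Lemma iso_trans L S1 S2 S3 : iso L S1 S2 -> iso L S2 S3 -> iso L S1 S3.
Proof.
move=> [f [bf Hf]] [h [bh Hh]]; exists (h \o f); split; first exact: bij_comp.
move=> i t At; rewrite map_comp Hh ?atom_map //; exact: Hf.
Qed.

Lemma agree_sym L s S S' : agree L s S S' -> agree L s S' S.
Proof. by move=> H i t A B; rewrite H. Qed.

Lemma agree_trans L s S1 S2 S3 : agree L s S1 S2 -> agree L s S2 S3 -> agree L s S1 S3.
Proof. by move=> H1 H2 i t A B; rewrite H1 // H2. Qed.

Lemma agree_mono L s s' S S' : s <= s' -> agree L s S S' -> agree L s' S S' -> True.
Proof. by []. Qed.

Lemma agree_le L s s' S S' : s <= s' -> agree L s' S S' -> agree L s S S'.
Proof.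
move=> le H i t A B; apply: H => //; apply/allP => x /(allP B) hx.
exact: leq_trans hx le.
Qed.

Section Main.
Variables (L : signature) (K : nat -> structure).

Definition idx (S : structure) : nat :=
  match excluded_middle_informative (exists n, iso L (K n) S) with
  | left h => proj1_sig (constructive_indefinite_description _ h)
  | right _ => 0 end.

Lemma idx_spec S : LD L K S -> iso L (K (idx S)) S.
Proof.
move=> [_ ex]; rewrite /idx; case: excluded_middle_informative => // h.
by case: constructive_indefinite_description.
Qed.

Hypothesis fam : is_family L K.

Lemma idx_uniq S n : LD L K S -> iso L (K n) S -> idx S = n.
Proof.
move=> LS h; apply: (proj2 fam); exact: (iso_trans (idx_spec LS) (iso_sym h)).
Qed.

Lemma fin_eqN : Fin_learnable L K -> eqN_learnable L K.
Proof.
move=> [M [lM HM]]; exists idx; split.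
  move=> S LS; have [s0 [H0 [n [isn Hn]]]] := HM S LS.
  exists s0 => S' LS' ag.
  have e : M s0 S' = Some n by rewrite -(lM s0 S S') // Hn.
  have [s1 [H1 [n' [isn' Hn']]]] := HM S' LS'.
  have le : s1 <= s0.
    by rewrite leqNgt; apply/negP => /H1; rewrite e.
  move: (Hn' _ le); rewrite e => -[eq]; subst n'.
  by rewrite (idx_uniq LS isn) (idx_uniq LS' isn').
move=> S S' LS LS'; split.
  move=> h; symmetry; apply: idx_uniq => //; exact: iso_trans (idx_spec LS) h.
move=> e; apply: iso_trans (iso_sym (idx_spec LS)) _; rewrite e; exact: idx_spec.
Qed.

Lemma eqN_fin : eqN_learnable L K -> Fin_learnable L K.
Proof.
move=> [G [cG HG]].
pose P s S := forall T, LD L K T -> agree L s S T -> G T = G S.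
pose M s S := if excluded_middle_informative (P s S) then Some (idx S) else None.
have Pmono s s' S : s <= s' -> P s S -> P s' S.
  by move=> le h T LT ag; apply: h => //; exact: agree_le ag.
have PS s S S' : LD L K S -> LD L K S' -> agree L s S S' -> P s S -> P s S'.
  move=> LS LS' ag h T LT ag'.
  rewrite (h T LT (agree_trans ag ag')); symmetry; exact: h.
exists M; split.
  move=> s S S' LS LS' ag; rewrite /M.
  case: excluded_middle_informative => h1; case: excluded_middle_informative => h2 //.
  - congr Some; symmetry; apply: idx_uniq => //; apply: iso_trans (idx_spec LS) _.
    by apply/(HG _ _ LS LS'); symmetry; apply: h1.
  - by case: h2; exact: PS ag h1.
  - by case: h1; apply: PS h2 => //; exact: agree_sym.
move=> S LS.
have exP : exists s, (fun s => if excluded_middle_informative (P s S) then true else false) s.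
  have [s hs] := cG S LS; exists s; case: excluded_middle_informative => // []; exact: hs.
case: (ex_minnP exP) => s0 hs0 hmin.
have P0 : P s0 S by move: hs0; case: excluded_middle_informative.
exists s0; split.
  move=> t lt; rewrite /M; case: excluded_middle_informative => // h.
  have := hmin t; case: excluded_middle_informative => // _ /(_ isT).
  by rewrite leqNgt lt.
exists (idx S); split; first exact: idx_spec.
move=> t le; rewrite /M; case: excluded_middle_informative => // h.
by case: h; exact: Pmono le P0.
Qed.
End Main.

Theorem mainTheorem3 (L : signature) (K : nat -> structure) :
  is_family L K -> (Fin_learnable L K <-> eqN_learnable L K).
Proof. move=> fam; split; [exact: fin_eqN | exact: eqN_fin]. Qed.
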